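(* Let $n\ge 2$. The number of MAU pairs $(u,v)$ of binary words with $|u|=|v|=n$ and $\big||u|_c-|v|_c\big|\ge 2$ for all $c\in\{a,b\}$ equals $$2\sum_{r_2=0}^{n-2}\ \sum_{r_1=r_2+2}^{n}{}_{A}N_{O}^{B_{r_2}},$$ where, for each $(r_1,r_2)$, $A=(r_2-r_1,\,r_1-r_2)$, $O=(0,0)$ and $B_{r_2}=(r_2,\,n-r_2)$.
   Context: Let $\Sigma=\{a,b\}$. For a word $w$ and a letter $c$, $|w|_c$ denotes the number of occurrences of $c$ in $w$. Two words $x,y$ are abelian equivalent, written $x\sim_{\mathrm{abl}}y$, if $|x|_c=|y|_c$ for all $c\in\Sigma$. For words $u,v$: a pair $(x,y)$ is an internal abelian-border of $(u,v)$ if $x$ is a nonempty proper suffix of $u$, $y$ is a proper prefix of $v$, and $x\sim_{\mathrm{abl}}y$; it is an external abelian-border of $(u,v)$ if $x$ is a nonempty proper prefix of $u$, $y$ is a proper suffix of $v$, and $x\sim_{\mathrm{abl}}y$. The pair $(u,v)$ is mutually abelian-bordered (MAB) if it has both an internal and an external abelian-border, and mutually abelian-unbordered (MAU) if it has neither. A lattice path is a finite sequence of points of $\mathbb Z^2$ in which each consecutive difference is $(1,0)$ (an east step) or $(0,1)$ (a north step). The word $w(p)\in\Sigma^*$ of a lattice path $p$ records its steps in order, writing $a$ for an east step and $b$ for a north step; conversely, for a point $A\in\mathbb Z^2$ and a word $w$, $p_A(w)$ is the lattice path starting at $A$ whose word is $w$. For lattice paths $p,q$, $p\cap q$ denotes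 the set of lattice points lying on both. For distinct lattice points $A,B,C$, ${}_{A}\mathcal N_{B}^{C}$ is the set of triples $(p,q,p')$ where $p$ is a lattice path from $A$ to $C$, $q$ is a lattice path from $B$ to $C$, $p'=p_B(w(p))$, $p\cap q=\{C\}$ and $q\cap p'=\{B\}$; and ${}_{A}N_{B}^{C}=|{}_{A}\mathcal N_{B}^{C}|$. *)

(* Defs.v *)
From mathcomp Require Import all_boot all_order all_algebra.
Set Implicit Arguments. Unset Strict Implicit. Unset Printing Implicit Defensive.
Import Order.TTheory GRing.Theory Num.Theory.

Definition la : bool := false.
Definition lb : bool := true.

Definition occ (w : seq bool) (c : bool) : nat := count_mem c w.

Definition abl (x y : seq bool) : bool := [forall c : bool, occ x c == occ y c].

Definition prefixes (w : seq bool) : seq (seq bool) := [seq take i w | i <- iota 0 (size w).+1].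
Definition suffixes (w : seq bool) : seq (seq bool) := [seq drop i w | i <- iota 0 (size w).+1].

Definition has_int_border (u v : seq bool) : bool :=
  has (fun x => has (fun y =>
     [&& 0 < size x, size x < size u, size y < size v & abl x y]) (prefixes v))
     (suffixes u).

Definition has_ext_border (u v : seq bool) : bool :=
  has (fun x => has (fun y =>
     [&& 0 < size x, size x < size u, size y < size v & abl x y]) (suffixes v))
     (prefixes u).

Definition MAU (u v : seq bool) : bool := ~~ has_int_border u v && ~~ has_ext_border u v.

Definition point := (int * int)%type.

Definition step (P : point) (c : bool) : point :=
  if c then (P.1, (P.2 + 1)%R) else ((P.1 + 1)%R, P.2).

Definition path_of (A : point) (w : seq bool) : seq point := A :: scanl step A w.

Definition path_end (A : point) (w : seq bool) : point := last A (path_of A w).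

Definition dist1 (A C : point) : nat := (`|(C.1 - A.1)%R|%N + `|(C.2 - A.2)%R|%N)%N.

Definition meets_only (p q : seq point) (C : point) : bool :=
  [&& C \in p, C \in q & all (fun z => (z \in q) ==> (z == C)) p].

(* _A N_B^C : triples (p,q,p') with p a path from A to C, q a path from B to C,
   p' = p_B(w(p)), p \cap q = {C}, q \cap p' = {B}.  A lattice path is
   determined by its start point and its word, so p = p_A(w1), q = p_B(w2),
   and every path from A to C has exactly dist1 A C steps. *)
Definition Ntriples (A B C : point) : nat :=
  #|[set wq : (dist1 A C).-tuple bool * (dist1 B C).-tuple bool |
      let p := path_of A wq.1 in
      let q := path_of B wq.2 in
      let p' := path_of B wq.1 in
      [&& path_end A wq.1 == C, path_end B wq.2 == C,
          meets_only p q C & meets_only q p' B]]|.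

(* Main.v *)
Require Import Defs.
From mathcomp Require Import all_boot all_order all_algebra zify.
Set Implicit Arguments. Unset Strict Implicit. Unset Printing Implicit Defensive.
Import Order.TTheory GRing.Theory Num.Theory.

Definition cF (s : seq bool) : nat := count_mem false s.
Definition cT (s : seq bool) : nat := count_mem true s.
Definition E (s : seq bool) (k : nat) : nat := cF (take k s).
Definition T (x y : seq bool) (k : nat) : int := (Posz (E x k) - Posz (E y k))%R.
Definition avoid (n : nat) (x y : seq bool) : bool :=
  [forall k : 'I_n, (0 < k)%N ==> (T x y k != 0%R) && (T x y k != T x y n)].

Lemma cFT s : cF s + cT s = size s.
Proof. rewrite /cF /cT; elim: s => //= [[] s IH] /=; lia. Qed.

Lemma cF_cat s t : cF (s ++ t) = cF s + cF t.
Proof. by rewrite /cF count_cat. Qed.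

Lemma cF_rev s : cF (rev s) = cF s.
Proof. by rewrite /cF count_rev. Qed.

Lemma cF_take_drop k s : cF (take k s) + cF (drop k s) = cF s.
Proof. by rewrite -cF_cat cat_take_drop. Qed.

Lemma E_le k s : E s k <= k.
Proof. rewrite /E; have := cFT (take k s); rewrite size_take_min; lia. Qed.

Lemma E_size s : E s (size s) = cF s.
Proof. by rewrite /E take_size. Qed.

Lemma abl_eq x y : abl x y = (size x == size y) && (cF x == cF y).
Proof.
rewrite /abl /occ; apply/forallP/andP.
- move=> H; have Hf := eqP (H false); have Ht := eqP (H true).
  have := cFT x; have := cFT y; rewrite /cF /cT; split; apply/eqP; lia.
- case=> /eqP Hs /eqP Hf [|]; apply/eqP => //.
  have := cFT x; have := cFT y; rewrite /cF /cT in Hf *; lia.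
Qed.

Lemma avoidP n x y : avoid n x y <->
  (forall k, 0 < k < n -> T x y k <> 0%R /\ T x y k <> T x y n).
Proof.
split.
- move=> /forallP H k /andP[k0 kn]; have := H (Ordinal kn) => /implyP /(_ k0) /andP[/eqP ? /eqP ?]; by [].
- move=> H; apply/forallP => k; apply/implyP => k0.
  have [? ?] := H k (introT andP (conj k0 (ltn_ord k))); apply/andP; split; apply/eqP; by [].
Qed.

Lemma int_border u v n : size u = n -> size v = n ->
  has_int_border u v = [exists k : 'I_n, (0 < k) && (E (rev u) k == E v k)].
Proof.
move=> su sv; rewrite /has_int_border /suffixes /prefixes su sv.
apply/hasP/existsP.
- case=> x /mapP [i]; rewrite mem_iota => /andP[_ Hi] ->.
  case/hasP => y /mapP [j]; rewrite mem_iota => /andP [_ Hj] ->.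
  rewrite abl_eq => /and4P [H1 H2 H3 /andP[Hs Hc]].
  rewrite size_drop size_take_min su sv in H1 H2 H3 Hs.
  have jn : j < n by lia.
  exists (Ordinal jn) => /=; apply/andP; split; first lia.
  rewrite /E take_rev cF_rev su (_ : n - j = i) //; lia.
- case=> k /andP[k0 /eqP Hk]; exists (drop (n-k) u).
    apply/mapP; exists (n-k) => //; rewrite mem_iota; lia.
  apply/hasP; exists (take k v).
    apply/mapP; exists (k:nat) => //; rewrite mem_iota; have := ltn_ord k; lia.
  have kn := ltn_ord k.
  rewrite abl_eq size_drop size_take_min su sv; apply/and4P; split; try lia.
  apply/andP; split; first (apply/eqP; lia).
  apply/eqP; move: Hk; rewrite /E take_rev cF_rev su //.
Qed.

Lemma ext_border u v n : size u = n -> size v = n ->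
  has_ext_border u v = [exists k : 'I_n, (0 < k) && (cF (take (n - k) u) == cF (drop k v))].
Proof.
move=> su sv; rewrite /has_ext_border /suffixes /prefixes su sv.
apply/hasP/existsP.
- case=> x /mapP [i]; rewrite mem_iota => /andP[_ Hi] ->.
  case/hasP => y /mapP [j]; rewrite mem_iota => /andP [_ Hj] ->.
  rewrite abl_eq => /and4P [H1 H2 H3 /andP[Hs Hc]].
  rewrite size_drop size_take_min su sv in H1 H2 H3 Hs.
  have jn : j < n by lia.
  exists (Ordinal jn) => /=; apply/andP; split; first lia.
  rewrite (_ : n - j = i) //; lia.
- case=> k /andP[k0 /eqP Hk]; exists (take (n-k) u).
    apply/mapP; exists (n-k) => //; rewrite mem_iota; lia.
  apply/hasP; exists (drop k v).
    apply/mapP; exists (k:nat) => //; rewrite mem_iota; have := ltn_ord k; lia.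
  have kn := ltn_ord k.
  rewrite abl_eq size_drop size_take_min su sv; apply/and4P; split; lia.
Qed.

Lemma MAU_avoid u v n : size u = n -> size v = n -> MAU u v = avoid n v (rev u).
Proof.
move=> su sv; rewrite /MAU (int_border su sv) (ext_border su sv).
have ER : forall k, k <= n -> E (rev u) k + cF (take (n - k) u) = cF u.
  move=> k kn; rewrite /E take_rev cF_rev su addnC cF_take_drop //.
have EV : forall k, E v k + cF (drop k v) = cF v.
  by move=> k; rewrite /E cF_take_drop.
have Tn : T v (rev u) n = (Posz (cF v) - Posz (cF u))%R.
  have e1 : E v n = cF v by rewrite -sv E_size.
  have e2 : E (rev u) n = cF u by rewrite -su -(size_rev u) E_size cF_rev.
  by rewrite /T e1 e2.
apply/andP/idP.
- case=> /existsPn H1 /existsPn H2; apply/avoidP => k /andP[k0 kn].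
  have := H1 (Ordinal kn); have := H2 (Ordinal kn) => /=; rewrite k0 /= Tn /T.
  have := ER k (ltnW kn); have := EV k.
  move=> h1 h2 /eqP h3 /eqP h4; split; lia.
- move/avoidP => H; split; apply/existsPn => k; apply/negP => /andP[k0 /eqP Hk];
  have [h1 h2] := H k (introT andP (conj k0 (ltn_ord k))); move: h1 h2; rewrite Tn /T;
  have := ER k (ltnW (ltn_ord k)); have := EV k; lia.
Qed.

Lemma abs_cond u v n : size u = n -> size v = n ->
  [forall c : bool, (2 <= `|(Posz (occ u c) - Posz (occ v c))%R|)%N] =
  ((2 <= T v (rev u) n)%R || (T v (rev u) n <= -2)%R).
Proof.
move=> su sv.
have Tn : T v (rev u) n = (Posz (cF v) - Posz (cF u))%R.
  have e1 : E v n = cF v by rewrite -sv E_size.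
  have e2 : E (rev u) n = cF u by rewrite -su -(size_rev u) E_size cF_rev.
  by rewrite /T e1 e2.
rewrite Tn; have := cFT u; have := cFT v; rewrite /cF /cT /occ => h1 h2.
apply/forallP/orP.
- move=> /(_ false); lia.
- move=> H [|]; lia.
Qed.

Definition pt (A : point) (w : seq bool) (k : nat) : point :=
  ((A.1 + Posz (E w k))%R, (A.2 + Posz (cT (take k w)))%R).

Lemma pt0 A w : pt A w 0 = A.
Proof. by case: A => a1 a2; rewrite /pt /E take0 /cF /cT /= !addr0. Qed.

Lemma ptS A c w k : pt A (c :: w) k.+1 = pt (step A c) w k.
Proof.
case: A => a1 a2; case: c; rewrite /pt /step /E /cF /cT /=; f_equal; lia.
Qed.

Lemma mem_path A w z :
  (z \in path_of A w) <-> (exists2 k, k <= size w & z = pt A w k).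
Proof.
elim: w A => [|c w IH] A.
- rewrite /path_of /= in_cons in_nil orbF; split.
  + by move/eqP => ->; exists 0 => //; rewrite pt0.
  + case=> k; rewrite leqn0 => /eqP -> ->; by rewrite pt0.
- rewrite (_ : path_of A (c :: w) = A :: path_of (step A c) w) // in_cons.
  split.
  + case/orP => [/eqP ->|]; first by exists 0 => //; rewrite pt0.
    case/IH=> k kw ->; exists k.+1 => //; by rewrite ptS.
  + case=> [[|k]] /= kw zk; first by rewrite zk pt0 eqxx.
    apply/orP; right; apply/(IH (step A c)); exists k => //; by rewrite zk ptS.
Qed.

Lemma path_end_pt A w : path_end A w = pt A w (size w).
Proof.
elim: w A => [|c w IH] A; first by rewrite /path_end /= pt0.
by rewrite /= ptS -IH.
Qed.

Lemma cT_take k w : k <= size w -> cT (take k w) + E w k = k.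
Proof. move=> kw; rewrite addnC /E cFT size_take_min; lia. Qed.

Lemma E0 w : E w 0 = 0.
Proof. by rewrite /E take0. Qed.

Lemma trip_char n r1 r2 w1 w2 : r2.+2 <= r1 -> r1 <= n -> size w1 = n -> size w2 = n ->
  let A := ((Posz r2 - Posz r1)%R, (Posz r1 - Posz r2)%R) in
  let O := (0%R, 0%R) : point in
  let C := (Posz r2, (Posz n - Posz r2)%R) in
  [&& path_end A w1 == C, path_end O w2 == C,
      meets_only (path_of A w1) (path_of O w2) C &
      meets_only (path_of O w2) (path_of O w1) O]
  = [&& cF w1 == r1, cF w2 == r2 & avoid n w1 w2].
Proof.
move=> h1 h2 s1 s2 A O C.
have F1 : forall k, k <= n -> cT (take k w1) + E w1 k = k by move=> k; rewrite -s1; apply: cT_take.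
have F2 : forall k, k <= n -> cT (take k w2) + E w2 k = k by move=> k; rewrite -s2; apply: cT_take.
have N1 : E w1 n = cF w1 by rewrite -s1 E_size.
have N2 : E w2 n = cF w2 by rewrite -s2 E_size.
have Z1 := E0 w1; have Z2 := E0 w2.
have L1 : forall k, E w1 k <= k := fun k => E_le k w1.
have L2 : forall k, E w2 k <= k := fun k => E_le k w2.
rewrite !path_end_pt s1 s2.
apply/idP/idP.
- case/and4P => /eqP e1 /eqP e2 m1 m2.
  have ex1 := congr1 fst e1; have ex2 := congr1 fst e2; rewrite /= in ex1 ex2.
  apply/and3P; split; [apply/eqP; lia | apply/eqP; lia |].
  apply/avoidP => k /andP[k0 kn]; rewrite /T; split => HT.
  + case/and3P: m2 => _ _ /allP /(_ (pt O w2 k)) H.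
    have : pt O w2 k \in path_of O w2 by apply/mem_path; exists k => //; lia.
    move=> /H /implyP; have : pt O w2 k \in path_of O w1.
      apply/mem_path; exists k; first lia.
      have := F1 k (ltnW kn); have := F2 k (ltnW kn); rewrite /pt /=; move=> a b; f_equal; lia.
    move=> hh /(_ hh) /eqP Hp; have := congr1 fst Hp; have := congr1 snd Hp; rewrite /pt /=.
    have := F2 k (ltnW kn); lia.
  + case/and3P: m1 => _ _ /allP /(_ (pt A w1 k)) H.
    have : pt A w1 k \in path_of A w1 by apply/mem_path; exists k => //; lia.
    move=> /H /implyP; have : pt A w1 k \in path_of O w2.
      apply/mem_path; exists k; first lia.
      have := F1 k (ltnW kn); have := F2 k (ltnW kn); rewrite /pt /=; move=> a b; f_equal; lia.
    move=> hh /(_ hh) /eqP Hp; have := congr1 fst Hp; have := congr1 snd Hp; rewrite /pt /=.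
    have := F1 k (ltnW kn); lia.
- case/and3P => /eqP c1 /eqP c2 /avoidP av.
  have Ce1 : pt A w1 n = C by rewrite /pt /C /=; rewrite N1 c1; have := F1 n (leqnn n); move=> hh; f_equal; lia.
  have Ce2 : pt O w2 n = C by rewrite /pt /C /=; rewrite N2 c2; have := F2 n (leqnn n); move=> hh; f_equal; lia.
  apply/and4P; split; [by rewrite Ce1 | by rewrite Ce2 | |].
  + apply/and3P; split.
    * by apply/mem_path; exists n; rewrite ?s1.
    * by apply/mem_path; exists n; rewrite ?s2.
    * apply/allP => z /mem_path [k kn ->]; apply/implyP => /mem_path [j jn Hp].
      rewrite s1 in kn; rewrite s2 in jn.
      have ex := congr1 fst Hp; have ey := congr1 snd Hp; rewrite /pt /= in ex ey.
      have := F1 k kn; have := F2 j jn => f2 f1.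
      have kj : k = j by lia.
      subst j.
      have [k0|k0] := posnP k; first by subst k; move: ex; rewrite Z1 Z2; lia.
      have [kn'|kn'] := ltnP k n.
        by have [_ /(_ _)] := av k (introT andP (conj k0 kn')); rewrite /T; lia.
      have -> : k = n by lia.
      by rewrite Ce1.
  + apply/and3P; split.
    * by apply/mem_path; exists 0; rewrite ?pt0.
    * by apply/mem_path; exists 0; rewrite ?pt0.
    * apply/allP => z /mem_path [k kn ->]; apply/implyP => /mem_path [j jn Hp].
      rewrite s2 in kn; rewrite s1 in jn.
      have ex := congr1 fst Hp; have ey := congr1 snd Hp; rewrite /pt /= in ex ey.
      have := F2 k kn; have := F1 j jn => f1 f2.
      have kj : k = j by lia.
      subst j.
      have [k0|k0] := posnP k; first by subst k; rewrite pt0.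
      have [kn'|kn'] := ltnP k n.
        have [H0 _] := av k (introT andP (conj k0 kn')); exfalso; apply: H0; rewrite /T; lia.
      have : k = n by lia.
      move=> kn2; subst k; exfalso; move: ex; rewrite N1 N2 c1 c2; lia.
Qed.

Lemma sum_eqind m k c (s : bool) :
  \sum_(m <= i < k) (((c == i) && s) : nat) = ((m <= c) && (c < k) && s).
Proof.
case: s; last by rewrite andbF big1 // => i _; rewrite andbF.
under eq_bigr do rewrite andbT. rewrite andbT.
elim: k => [|k IH]; first by rewrite big_geq // ltn0 andbF.
case: (leqP m k) => mk.
- rewrite big_nat_recr //= IH; lia.
- rewrite big_geq; last lia.
  lia.
Qed.

Lemma card_sum (X : finType) (Q : pred X) : #|[set x | Q x]| = \sum_x (Q x : nat).
Proof.
rewrite -sum1_card big_mkcond /=; apply: eq_bigr => x _; rewrite inE; by case: (Q x).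
Qed.

Lemma point_sum n a b (r : bool) : 2 <= n -> a <= n ->
  \sum_(0 <= r2 < n.-1) \sum_(r2.+2 <= r1 < n.+1) (([&& a == r1, b == r2 & r]) : nat)
  = (r && (b.+2 <= a)).
Proof.
move=> hn ha.
rewrite (eq_bigr (fun r2 => ((b == r2) && ((b.+2 <= a) && (a < n.+1) && r)) : nat)); last first.
  move=> r2 _; rewrite sum_eqind; case: eqP => [->|_]; lia.
rewrite sum_eqind; lia.
Qed.

Lemma Ntriples_eq n r1 r2 : r2.+2 <= r1 -> r1 <= n ->
  Ntriples ((Posz r2 - Posz r1)%R, (Posz r1 - Posz r2)%R) (0%R, 0%R)
           (Posz r2, (Posz n - Posz r2)%R)
  = #|[set xy : n.-tuple bool * n.-tuple bool |
        [&& cF xy.1 == r1, cF xy.2 == r2 & avoid n xy.1 xy.2]]|.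
Proof.
move=> h1 h2; rewrite /Ntriples.
have d1 : dist1 ((Posz r2 - Posz r1)%R, (Posz r1 - Posz r2)%R) (Posz r2, (Posz n - Posz r2)%R) = n.
  rewrite /dist1 /=; lia.
have d2 : dist1 (0%R, 0%R) (Posz r2, (Posz n - Posz r2)%R) = n.
  rewrite /dist1 /=; lia.
rewrite d1 d2.
apply: eq_card => -[w1 w2]; rewrite !inE /=.
by apply: trip_char; rewrite ?size_tuple.
Qed.

Lemma avoid_sym n x y : avoid n y x = avoid n x y.
Proof.
apply/idP/idP => /avoidP H; apply/avoidP => k hk; have := H k hk; rewrite /T; lia.
Qed.

Lemma LHS_eq n :
  #|[set uv : n.-tuple bool * n.-tuple bool |
      MAU uv.1 uv.2 &&
      [forall c : bool, (2 <= `|(Posz (occ uv.1 c) - Posz (occ uv.2 c))%R|)%N]]|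
  = 2 * #|[set xy : n.-tuple bool * n.-tuple bool |
             avoid n xy.1 xy.2 && (2 <= T xy.1 xy.2 n)%R]|.
Proof.
pose f := fun uv : n.-tuple bool * n.-tuple bool => (uv.2, [tuple of rev uv.1]).
have finj : injective f.
  move=> [u v] [u' v'] [-> H]; congr pair; apply: val_inj.
  by rewrite -[val u]revK H revK.
pose g := fun xy : n.-tuple bool * n.-tuple bool => (xy.2, xy.1).
have ginj : injective g by move=> [x y] [x' y'] [-> ->].
set S := [set xy : n.-tuple bool * n.-tuple bool |
             avoid n xy.1 xy.2 && (2 <= T xy.1 xy.2 n)%R].
have -> : [set uv : n.-tuple bool * n.-tuple bool |
      MAU uv.1 uv.2 &&
      [forall c : bool, (2 <= `|(Posz (occ uv.1 c) - Posz (occ uv.2 c))%R|)%N]]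
   = f @^-1: (S :|: g @^-1: S).
  apply/setP => -[u v]; rewrite !inE /=.
  rewrite (@MAU_avoid _ _ n) ?size_tuple // (@abs_cond _ _ n) ?size_tuple // avoid_sym.
  rewrite /T; case: (avoid _ _ _); rewrite ?andbF //= ; lia.
rewrite card_preimset // cardsU card_preimset //.
have -> : S :&: g @^-1: S = set0.
  apply/setP => -[x y]; rewrite !inE /= /T; lia.
rewrite cards0 subn0; lia.
Qed.

Theorem mainTheorem11 (n : nat) (hn : (2 <= n)%N) :
  #|[set uv : n.-tuple bool * n.-tuple bool |
      MAU uv.1 uv.2 &&
      [forall c : bool, (2 <= `|(Posz (occ uv.1 c) - Posz (occ uv.2 c))%R|)%N]]|
  = (2 * \sum_(0 <= r2 < n.-1)
           \sum_(r2.+2 <= r1 < n.+1)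
              Ntriples ((Posz r2 - Posz r1)%R, (Posz r1 - Posz r2)%R) (0%R, 0%R)
                       (Posz r2, (Posz n - Posz r2)%R))%N.
Proof.
rewrite LHS_eq; congr (2 * _).
rewrite (eq_big_nat _ _ (F2 := fun r2 => \sum_(r2.+2 <= r1 < n.+1)
   \sum_(xy : n.-tuple bool * n.-tuple bool)
      (([&& cF xy.1 == r1, cF xy.2 == r2 & avoid n xy.1 xy.2]) : nat))); last first.
  move=> r2 hr2; apply: eq_big_nat => r1 hr1.
  rewrite Ntriples_eq; [exact: card_sum | lia | lia].
under eq_bigr => r2 _ do rewrite exchange_big /=.
rewrite exchange_big /= card_sum; apply: eq_bigr => -[x y] _ /=.
rewrite point_sum //; last by have := count_size (pred1 false) x; rewrite size_tuple.
have e1 : E x n = cF x by rewrite /E take_oversize // size_tuple.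
have e2 : E y n = cF y by rewrite /E take_oversize // size_tuple.
rewrite /T e1 e2; set a := cF (val x); set b := cF (val y); congr (_ && _); apply/idP/idP; lia.
Qed.
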